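(* (1) If $\Sigma;\Gamma\vdash\tau:m$ and $\tau$ contains no equality guard, then there exists a context $\Gamma_{\min}$ (over the same variables as $\Gamma$) with $\Sigma;\Gamma_{\min}\vdash\tau:m$ and $\Gamma_{\min}\le\Gamma'$ for every context $\Gamma'$ over those variables with $\Sigma;\Gamma'\vdash\tau:m$. (2) If $\Sigma_0\vdash\sigma\dashv\Sigma$ where the definition block $\sigma$ contains no equality guard, then there exists a minimal signature $\Sigma_{\min}$ such that $\Sigma_0\vdash\sigma\dashv\Sigma_{\min}$, i.e. for every $\Sigma'$ with $\Sigma_0\vdash\sigma\dashv\Sigma'$, each parameter mode in $\Sigma_{\min}$ is $\le$ the corresponding parameter mode in $\Sigma'$.
   Context: Type expressions: $\tau,\kappa ::= \alpha \mid \mathsf{float}\mid\mathsf{int}\mid\mathsf{bool}\mid t(\tau_1,\dots,\tau_n)\mid \tau\to\kappa\mid \tau_1\times\dots\times\tau_n\mid \forall\alpha.\tau\mid\exists\alpha.\tau\mid (\tau \text{ with } \kappa_1=\kappa_2)$ (equality guard). Datatypes: $A ::= C_1\text{ of }\tau_1\mid\dots\mid C_n\text{ of }\tau_n$ (boxed variant) $\mid C\text{ of }\tau$ [unboxed] $\mid \{l_1:\tau_1;\dots;l_n:\tau_n\}$ (boxed record, fields possibly mutable) $\mid \{l:\tau\}$ [unboxed] $\mid \tau$ (type synonym). A definition block $\sigma$ is a list of mutually recursive definitions $t_i(\vec\alpha_i):=A_i$, $1\le i\le n$. Modes $\mathsf{Ind}<\mathsf{Sep}<\mathsf{Deepsep}$;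 composition $\mathsf{Ind}\circ m=\mathsf{Ind}$, $\mathsf{Sep}\circ m=m$, $\mathsf{Deepsep}\circ m=\mathsf{Deepsep}$. Contexts $\Gamma=\alpha_1:m_1,\dots$ ordered pointwise (same variables). A mode signature $\Sigma$ is a list of entries $t(\alpha_1:m_1,\dots,\alpha_n:m_n)$. Type-level judgment $\Sigma;\Gamma\vdash\tau:m$: (variable) $(\alpha:m)\in\Gamma$ gives $\alpha:m$; (constructor) $t(\alpha_1:m_1,\dots,\alpha_n:m_n)\in\Sigma$ and $\tau_i:m\circ m_i$ for all $i$ give $t(\tau_1,\dots,\tau_n):m$; (arrow) $\tau:m\circ\mathsf{Ind}$, $\kappa:m\circ\mathsf{Ind}$ give $\tau\to\kappa:m$; (product) $\tau_i:m\circ\mathsf{Ind}$ for all $i$ gives $\tau_1\times\dots\times\tau_n:m$; (forall) $\Sigma;\Gamma,\alpha:n\vdash\tau:m$ for some $n$ gives $\Sigma;\Gamma\vdash\forall\alpha.\tau:m$; (exists) $\Sigma;\Gamma,\alpha:\mathsf{Ind}\vdash\tau:m$ gives $\Sigma;\Gamma\vdash\exists\alpha.\tau:m$; (conversion) $\tau:m$ and $m\ge n$ give $\tau:n$; (guard) if for every $\Gamma'\ge\Gamma$ with $\Sigma;\Gamma'\vdash\kappa_1=\kappa_2$ we have $\Sigma;\Gamma'\vdash\tau:m$, then $\Sigma;\Gamma\vdash(\tau\text{ with }\kappa_1=\kappa_2):m$, where $\Sigma;\Gamma\vdash\tau_1=\tau_2$ means for all $m$, $\Sigma;\Gamma\vdash\tau_1:m\iff\Sigma;\Gamma\vdash\tau_2:m$.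 Datatype judgment $\Sigma;\Gamma\vdash_{\mathsf{decl}}A$: boxed variants and boxed records are always accepted; an unboxed variant $C\text{ of }\tau$, an unboxed record $\{l:\tau\}$, or a type synonym $\tau$ is accepted iff $\Sigma;\Gamma\vdash\tau:\mathsf{Sep}$. Block judgment: $\Sigma_0\vdash(t_i(\vec\alpha_i):=A_i)_{1\le i\le n}\dashv\Sigma_{\mathsf{block}}$ holds when $\Sigma_{\mathsf{block}}=t_1(\vec{\alpha_1}:\vec{m_1}),\dots,t_n(\vec{\alpha_n}:\vec{m_n})$ for some modes $\vec{m_i}$ and, for each $i$, $\Sigma_0,\Sigma_{\mathsf{block}};\vec{\alpha_i}:\vec{m_i}\vdash_{\mathsf{decl}}A_i$. *)

(* Defs.v *)
From Stdlib Require Import List.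
Import ListNotations.

Inductive mode := Ind | Sep | Deepsep.

Definition mode_rank (m : mode) : nat :=
  match m with Ind => 0 | Sep => 1 | Deepsep => 2 end.

Definition mode_le (m n : mode) : Prop := mode_rank m <= mode_rank n.

Definition mode_comp (m n : mode) : mode :=
  match m with Ind => Ind | Sep => n | Deepsep => Deepsep end.

Definition tname := nat.

(** Variables use de Bruijn LEVELS: [TVar k] is the k-th
    variable of the (ordered) context; a binder [TForall]/[TExists] binds the
    variable at level [length Γ] (i.e. it is appended at the end of Γ). *)
Inductive ty : Type :=
| TVar (k : nat)
| TFloat
| TInt
| TBool
| TCon (t : tname) (args : list ty)
| TArrow (a b : ty)
| TProd (ts : list ty)
| TForall (body : ty)
| TExists (body : ty)
| TGuard (body k1 k2 : ty).   (* (body with k1 = k2) *)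

Definition ctx := list mode.
Definition signature := list (tname * list mode).

Definition ctx_le (G1 G2 : ctx) : Prop := Forall2 mode_le G1 G2.

(** Because the guard rule mentions the judgment
    negatively, it is defined by structural recursion on τ.  Each case reads:
    "some structural rule concludes τ : m' for some m' >= m" (the conversion
    rule, which is transitive, applied at the root). *)
Fixpoint has_mode (S : signature) (G : ctx) (t : ty) (m : mode) {struct t} : Prop :=
  exists m', mode_le m m' /\
  match t with
  | TVar k => nth_error G k = Some m'
  | TFloat | TInt | TBool => False   (* no rule in the given system *)
  | TCon c args =>
      exists ms, In (c, ms) S /\
      (fix go (l : list ty) (ms : list mode) {struct l} : Prop :=
         match l, ms with
         | [], [] => True
         | a :: l', mi :: ms' => has_mode S G a (mode_comp m' mi) /\ go l' ms'
         | _, _ => False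
         end) args ms
  | TArrow a b =>
      has_mode S G a (mode_comp m' Ind) /\ has_mode S G b (mode_comp m' Ind)
  | TProd ts =>
      (fix go (l : list ty) {struct l} : Prop :=
         match l with
         | [] => True
         | a :: l' => has_mode S G a (mode_comp m' Ind) /\ go l'
         end) ts
  | TForall body => exists n, has_mode S (G ++ [n]) body m'
  | TExists body => has_mode S (G ++ [Ind]) body m'
  | TGuard body k1 k2 =>
      forall G', ctx_le G G' ->
        (forall n, has_mode S G' k1 n <-> has_mode S G' k2 n) ->
        has_mode S G' body m'
  end.

Fixpoint no_guard (t : ty) : Prop :=
  match t with
  | TVar _ | TFloat | TInt | TBool => True
  | TCon _ args =>
      (fix go (l : list ty) : Prop :=
         match l with [] => True | a :: l' => no_guard a /\ go l' end) args
  | TArrow a b => no_guard a /\ no_guard b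
  | TProd ts =>
      (fix go (l : list ty) : Prop :=
         match l with [] => True | a :: l' => no_guard a /\ go l' end) ts
  | TForall b | TExists b => no_guard b
  | TGuard _ _ _ => False
  end.

Inductive datatype : Type :=
| DVariant (cs : list (nat * ty))
| DVariantUnboxed (c : nat) (t : ty)
| DRecord (fields : list (nat * bool * ty))       (* boxed record; bool = mutable *)
| DRecordUnboxed (l : nat) (t : ty)
| DSynonym (t : ty).

Definition decl_ok (S : signature) (G : ctx) (A : datatype) : Prop :=
  match A with
  | DVariant _ | DRecord _ => True
  | DVariantUnboxed _ t | DRecordUnboxed _ t | DSynonym t => has_mode S G t Sep
  end.

Definition datatype_no_guard (A : datatype) : Prop :=
  match A with
  | DVariant cs => forall c t, In (c, t) cs -> no_guard t
  | DRecord fs => forall l b t, In (l, b, t) fs -> no_guard t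
  | DVariantUnboxed _ t | DRecordUnboxed _ t | DSynonym t => no_guard t
  end.

(** A definition block: entries t_i(α_i1..α_ik) := A_i, given as
    (t_i, k = number of parameters, A_i); the parameters are the context
    variables at levels 0..k-1. *)
Definition block := list (tname * nat * datatype).

Definition block_no_guard (sg : block) : Prop :=
  forall t k A, In (t, k, A) sg -> datatype_no_guard A.

Definition block_judg (S0 : signature) (sg : block) (Sb : signature) : Prop :=
  Forall2 (fun (d : tname * nat * datatype) (e : tname * list mode) =>
             fst e = fst (fst d) /\ length (snd e) = snd (fst d) /\
             decl_ok (S0 ++ Sb) (snd e) (snd d))
          sg Sb.

Definition sig_le (S1 S2 : signature) : Prop :=
  Forall2 (fun e1 e2 : tname * list mode =>
             fst e1 = fst e2 /\ Forall2 mode_le (snd e1) (snd e2)) S1 S2.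

(* Main.v *)
Require Import Defs.
From Stdlib Require Import List Lia Arith Classical.
Import ListNotations.

Definition ty_ind' (P : ty -> Prop) (HV : forall k, P (TVar k)) (HF : P TFloat)
  (HI : P TInt) (HB : P TBool)
  (HC : forall c args, Forall P args -> P (TCon c args))
  (HA : forall a b, P a -> P b -> P (TArrow a b))
  (HP : forall ts, Forall P ts -> P (TProd ts))
  (HFa : forall b, P b -> P (TForall b)) (HE : forall b, P b -> P (TExists b))
  (HG : forall b k1 k2, P b -> P k1 -> P k2 -> P (TGuard b k1 k2)) : forall t, P t :=
  fix F t := match t return P t with
  | TVar k => HV k | TFloat => HF | TInt => HI | TBool => HB
  | TCon c args => HC c args ((fix g (l : list ty) : Forall P l := match l with
        [] => Forall_nil P | a :: l' => @Forall_cons _ P a l' (F a) (g l') end) args)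
  | TArrow a b => HA a b (F a) (F b)
  | TProd ts => HP ts ((fix g (l : list ty) : Forall P l := match l with
        [] => Forall_nil P | a :: l' => @Forall_cons _ P a l' (F a) (g l') end) ts)
  | TForall b => HFa b (F b) | TExists b => HE b (F b)
  | TGuard b k1 k2 => HG b k1 k2 (F b) (F k1) (F k2) end.

Definition mmin (a b : mode) := if Nat.leb (mode_rank a) (mode_rank b) then a else b.

Ltac mt := repeat match goal with m : mode |- _ => destruct m end;
  unfold mode_le, mmin, mode_comp, mode_rank in *; simpl in *; try lia.

Lemma mle_refl a : mode_le a a. Proof. mt. Qed.
Lemma mle_trans a b c : mode_le a b -> mode_le b c -> mode_le a c. Proof. mt. Qed.
Lemma comp_mono_r m a b : mode_le a b -> mode_le (mode_comp m a) (mode_comp m b). Proof. mt. Qed.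
Lemma comp_mono_l m a b : mode_le a b -> mode_le (mode_comp a m) (mode_comp b m). Proof. mt. Qed.
Lemma mmin_l a b : mode_le (mmin a b) a. Proof. mt. Qed.
Lemma mmin_r a b : mode_le (mmin a b) b. Proof. mt. Qed.
Lemma mmin_glb m a b : mode_le m a -> mode_le m b -> mode_le m (mmin a b). Proof. mt. Qed.

Lemma go2_iff (f : ty -> mode -> Prop) : forall l ms,
  (fix go (l : list ty) (ms : list mode) {struct l} : Prop :=
     match l, ms with [], [] => True | a :: l', mi :: ms' => f a mi /\ go l' ms'
     | _, _ => False end) l ms <-> Forall2 f l ms.
Proof.
  induction l; destruct ms; split; intro H; simpl in *; try tauto.
  - constructor.
  - inversion H.
  - inversion H.
  - destruct H as [Ha Hb]. constructor; auto. apply IHl; auto.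
  - inversion H; subst. split; auto. apply IHl; auto.
Qed.

Lemma go1_iff (f : ty -> Prop) : forall l,
  (fix go (l : list ty) {struct l} : Prop :=
     match l with [] => True | a :: l' => f a /\ go l' end) l <-> Forall f l.
Proof.
  induction l; split; intro H; simpl in *; try tauto.
  - constructor.
  - destruct H as [Ha Hb]. constructor; auto. apply IHl; auto.
  - inversion H; subst. split; auto. apply IHl; auto.
Qed.

Lemma hm_con S G c args m : has_mode S G (TCon c args) m <->
  exists m', mode_le m m' /\ exists ms, In (c, ms) S /\
     Forall2 (fun a mi => has_mode S G a (mode_comp m' mi)) args ms.
Proof.
  simpl. split; intros [m' [Hle [ms [Hin H]]]]; exists m'; split; auto; exists ms; split; auto;
  apply (go2_iff (fun a mi => has_mode S G a (mode_comp m' mi))); auto.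
Qed.

Lemma hm_prod S G ts m : has_mode S G (TProd ts) m <->
  exists m', mode_le m m' /\ Forall (fun a => has_mode S G a (mode_comp m' Ind)) ts.
Proof.
  simpl. split; intros [m' [Hle H]]; exists m'; split; auto;
  apply (go1_iff (fun a => has_mode S G a (mode_comp m' Ind))); auto.
Qed.

Lemma ng_list : forall l,
  (fix go (l : list ty) : Prop := match l with [] => True | a :: l' => no_guard a /\ go l' end) l
  -> Forall no_guard l.
Proof. induction l; simpl; intros; [constructor | destruct H; constructor; auto]. Qed.

Lemma down S G t m m0 : has_mode S G t m -> mode_le m0 m -> has_mode S G t m0.
Proof.
  destruct t; intros [m' [Hle X]] H; exists m'; split; try exact X; eapply mle_trans; eauto.
Qed.

Definition siglt (S S' : signature) := forall c ms', In (c, ms') S' ->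
  exists ms, In (c, ms) S /\ Forall2 mode_le ms ms'.

Lemma anti S S' (HS : siglt S S') : forall t, no_guard t -> forall G m,
  has_mode S' G t m -> has_mode S G t m.
Proof.
  induction t using ty_ind'; intros Hng G m Hm.
  - exact Hm.
  - destruct Hm as [? [? []]].
  - destruct Hm as [? [? []]].
  - destruct Hm as [? [? []]].
  - apply hm_con in Hm. apply hm_con.
    destruct Hm as [m' [Hle [ms' [Hin HF]]]]. destruct (HS c ms' Hin) as [ms [Hin2 Hl]].
    exists m'; split; auto; exists ms; split; auto.
    apply ng_list in Hng. clear Hin Hin2.
    revert ms ms' HF Hl. induction H; intros ms ms' HF Hl; inversion HF; subst; inversion Hl; subst;
      constructor; inversion Hng; subst.
    + apply H; auto. eapply down; eauto. apply comp_mono_r; auto.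
    + eapply IHForall; eauto.
  - destruct Hm as [m' [Hle [Ha Hb]]]. destruct Hng. exists m'; repeat split; auto.
  - apply hm_prod in Hm. apply hm_prod. destruct Hm as [m' [Hle HF]]. exists m'; split; auto.
    apply ng_list in Hng. induction H; inversion HF; inversion Hng; subst; constructor; auto.
  - destruct Hm as [m' [Hle [n Hb]]]. exists m'; split; auto. exists n; auto.
  - destruct Hm as [m' [Hle Hb]]. exists m'; split; auto.
  - destruct Hng.
Qed.

Fixpoint cmeet (l1 l2 : list mode) : list mode :=
  match l1, l2 with a :: r1, b :: r2 => mmin a b :: cmeet r1 r2 | _, _ => [] end.

Lemma nth_cmeet : forall G1 G2 k a b, nth_error G1 k = Some a -> nth_error G2 k = Some b ->
  nth_error (cmeet G1 G2) k = Some (mmin a b).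
Proof.
  induction G1; destruct G2, k; simpl; intros; try discriminate.
  - congruence.
  - eauto.
Qed.

Lemma length_cmeet : forall G1 G2, length G1 = length G2 -> length (cmeet G1 G2) = length G1.
Proof. induction G1; destruct G2; simpl; intros; try discriminate; auto. Qed.

Lemma cmeet_app : forall G1 G2 a b, length G1 = length G2 ->
  cmeet (G1 ++ [a]) (G2 ++ [b]) = cmeet G1 G2 ++ [mmin a b].
Proof.
  induction G1; destruct G2; simpl; intros; try discriminate; auto. f_equal; auto.
Qed.

Lemma cmeet_le_l : forall G1 G2, length G1 = length G2 -> ctx_le (cmeet G1 G2) G1.
Proof. induction G1; destruct G2; simpl; intros; try discriminate; constructor; auto using mmin_l; apply IHG1; congruence. Qed.
Lemma cmeet_le_r : forall G1 G2, length G1 = length G2 -> ctx_le (cmeet G1 G2) G2.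
Proof. induction G1; destruct G2; simpl; intros; try discriminate; constructor; auto using mmin_r; apply IHG1; congruence. Qed.

Definition sfun (S : signature) := forall c ms1 ms2, In (c, ms1) S -> In (c, ms2) S -> ms1 = ms2.

Lemma nodup_sfun : forall S, NoDup (map fst S) -> sfun S.
Proof.
  induction S as [|[c0 m0] S IH]; simpl; intros H c ms1 ms2 H1 H2; [destruct H1|].
  inversion H as [|x y Hn Hnd]; subst.
  destruct H1 as [E1|H1]; destruct H2 as [E2|H2].
  - congruence.
  - inversion E1; subst. exfalso. apply Hn. apply in_map_iff. exists (c, ms2); auto.
  - inversion E2; subst. exfalso. apply Hn. apply in_map_iff. exists (c, ms1); auto.
  - eapply IH; eauto.
Qed.

Lemma meet S (HS : sfun S) : forall t, no_guard t -> forall G1 G2 m, length G1 = length G2 ->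
  has_mode S G1 t m -> has_mode S G2 t m -> has_mode S (cmeet G1 G2) t m.
Proof.
  induction t using ty_ind'; intros Hng G1 G2 m Hl H1 H2.
  - destruct H1 as [a [Ha E1]], H2 as [b [Hb E2]]. exists (mmin a b); split.
    + apply mmin_glb; auto.
    + apply nth_cmeet; auto.
  - destruct H1 as [? [? []]].
  - destruct H1 as [? [? []]].
  - destruct H1 as [? [? []]].
  - apply hm_con in H1, H2. apply hm_con.
    destruct H1 as [m1 [Hle1 [ms [Hin1 F1]]]], H2 as [m2 [Hle2 [ms2 [Hin2 F2]]]].
    rewrite <- (HS _ _ _ Hin1 Hin2) in F2.
    exists m; split; [apply mle_refl|]. exists ms; split; auto.
    apply ng_list in Hng. clear Hin1 Hin2.
    revert ms F1 F2. induction H; intros ms F1 F2; inversion F1; subst; inversion F2; subst;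
      constructor; inversion Hng; subst.
    + apply H; auto; eapply down; eauto; apply comp_mono_l; auto.
    + eapply IHForall; eauto.
  - destruct H1 as [m1 [Hle1 [Ha1 Hb1]]], H2 as [m2 [Hle2 [Ha2 Hb2]]]. destruct Hng.
    exists m; split; [apply mle_refl|]. split.
    + apply IHt1; auto; eapply down; eauto; apply comp_mono_l; auto.
    + apply IHt2; auto; eapply down; eauto; apply comp_mono_l; auto.
  - apply hm_prod in H1, H2. apply hm_prod.
    destruct H1 as [m1 [Hle1 F1]], H2 as [m2 [Hle2 F2]].
    exists m; split; [apply mle_refl|].
    apply ng_list in Hng.
    induction H; inversion F1; inversion F2; inversion Hng; subst; constructor; auto.
    apply H; auto; eapply down; eauto; apply comp_mono_l; auto.
  - destruct H1 as [m1 [Hle1 [n1 B1]]], H2 as [m2 [Hle2 [n2 B2]]].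
    exists m; split; [apply mle_refl|]. exists (mmin n1 n2).
    rewrite <- cmeet_app by auto. apply IHt; auto.
    + rewrite !length_app; simpl; auto.
    + eapply down; eauto.
    + eapply down; eauto.
  - destruct H1 as [m1 [Hle1 B1]], H2 as [m2 [Hle2 B2]].
    exists m; split; [apply mle_refl|].
    change (cmeet G1 G2 ++ [Ind]) with (cmeet G1 G2 ++ [mmin Ind Ind]).
    rewrite <- cmeet_app by auto. apply IHt; auto.
    + rewrite !length_app; simpl; auto.
    + eapply down; eauto.
    + eapply down; eauto.
  - destruct Hng.
Qed.

Lemma min_exists {A : Type} (le : A -> A -> Prop) (mt : A -> A -> A) (msr : A -> nat)
  (P : A -> Prop) :
  (forall a b, P a -> P b -> P (mt a b)) ->
  (forall a b, P a -> P b -> ~ le a b -> msr (mt a b) < msr a) ->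
  forall a, P a -> exists a0, P a0 /\ forall b, P b -> le a0 b.
Proof.
  intros Hc Hd a. remember (msr a) as k. revert a Heqk.
  induction k as [k IH] using lt_wf_ind. intros a Hk Pa.
  destruct (classic (forall b, P b -> le a b)) as [H|H].
  - exists a; auto.
  - apply not_all_ex_not in H. destruct H as [b Hb]. apply imply_to_and in Hb.
    destruct Hb as [Pb Nle].
    apply (IH (msr (mt a b)) ltac:(subst; apply Hd; auto) (mt a b) eq_refl (Hc a b Pa Pb)).
Qed.

Definition csum (G : ctx) : nat := fold_right (fun m acc => mode_rank m + acc) 0 G.

Lemma csum_cmeet_le : forall G1 G2, csum (cmeet G1 G2) <= csum G1.
Proof.
  induction G1; destruct G2; simpl; try lia.
  specialize (IHG1 G2). pose proof (mmin_l a m). unfold mode_le in H. lia.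
Qed.

Lemma cmeet_dec : forall G1 G2, length G1 = length G2 -> ~ ctx_le G1 G2 ->
  csum (cmeet G1 G2) < csum G1.
Proof.
  induction G1; destruct G2; simpl; intros Hl Hn; try discriminate.
  - exfalso; apply Hn; constructor.
  - destruct (Nat.le_gt_cases (mode_rank a) (mode_rank m)).
    + assert (~ ctx_le G1 G2) by (intro; apply Hn; constructor; auto).
      specialize (IHG1 G2 ltac:(congruence) H0). pose proof (mmin_l a m).
      unfold mode_le in H1. lia.
    + pose proof (csum_cmeet_le G1 G2).
      assert (mode_rank (mmin a m) < mode_rank a) by mt. lia.
Qed.

Fixpoint smeet (S1 S2 : signature) : signature :=
  match S1, S2 with e1 :: r1, e2 :: r2 => (fst e1, cmeet (snd e1) (snd e2)) :: smeet r1 r2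
  | _, _ => [] end.

Definition ssum (S : signature) : nat := fold_right (fun e acc => csum (snd e) + acc) 0 S.

Definition shape (S1 S2 : signature) :=
  Forall2 (fun e1 e2 : tname * list mode => fst e1 = fst e2 /\ length (snd e1) = length (snd e2)) S1 S2.

Lemma ssum_cons e S : ssum (e :: S) = csum (snd e) + ssum S.
Proof. reflexivity. Qed.
Lemma ssum_nil : ssum [] = 0.
Proof. reflexivity. Qed.

Lemma ssum_smeet_le : forall S1 S2, ssum (smeet S1 S2) <= ssum S1.
Proof.
  intros S1; induction S1 as [|a S1 IH]; intros [|p S2]; simpl smeet; rewrite ?ssum_cons, ?ssum_nil; simpl snd; try lia.
  specialize (IH S2). pose proof (csum_cmeet_le (snd a) (snd p)). lia.
Qed.

Lemma smeet_dec : forall S1 S2, shape S1 S2 -> ~ sig_le S1 S2 -> ssum (smeet S1 S2) < ssum S1.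
Proof.
  intros S1 S2 H. induction H as [|e1 e2 r1 r2 [Hf Hl] Hr IH]; intros Hn.
  - exfalso; apply Hn; constructor.
  - simpl smeet; rewrite !ssum_cons; simpl snd. destruct (classic (ctx_le (snd e1) (snd e2))).
    + assert (~ sig_le r1 r2) by (intro; apply Hn; constructor; auto).
      specialize (IH H0). pose proof (csum_cmeet_le (snd e1) (snd e2)). lia.
    + pose proof (cmeet_dec _ _ Hl H). pose proof (ssum_smeet_le r1 r2). lia.
Qed.

Definition Rel (Sx : signature) := fun (d : tname * nat * datatype) (e : tname * list mode) =>
  fst e = fst (fst d) /\ length (snd e) = snd (fst d) /\ decl_ok Sx (snd e) (snd d).

Lemma bj_shape : forall S0 sg S1 S2, block_judg S0 sg S1 -> block_judg S0 sg S2 -> shape S1 S2.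
Proof.
  intros S0 sg S1 S2 H H'.
  change (Forall2 (Rel (S0 ++ S1)) sg S1) in H. change (Forall2 (Rel (S0 ++ S2)) sg S2) in H'.
  generalize dependent (S0 ++ S2). generalize dependent (S0 ++ S1). intros X H. revert S2.
  unfold Rel in *.
  induction H as [|d e1 sg r1 [Hf [Hl _]] Hr IH]; intros S2 Y H2; inversion H2 as [|? e2 ? r2 [Hf2 [Hl2 _]]]; subst;
    constructor.
  - split; congruence.
  - eapply IH; eauto.
Qed.

Lemma bj_names : forall S0 sg S, block_judg S0 sg S -> map fst S = map (fun d => fst (fst d)) sg.
Proof.
  intros S0 sg S H. change (Forall2 (Rel (S0 ++ S)) sg S) in H.
  generalize dependent (S0 ++ S). intros X H. unfold Rel in *. induction H as [|d e sg r [Hf _] Hr IH]; simpl; f_equal; auto.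
Qed.

Lemma smeet_names : forall S1 S2, shape S1 S2 -> map fst (smeet S1 S2) = map fst S1.
Proof. intros S1 S2 H; induction H; simpl; f_equal; auto. Qed.

Lemma Forall2_refl_le : forall l, Forall2 mode_le l l.
Proof. induction l; constructor; auto using mle_refl. Qed.

Lemma siglt_app S0 A B : siglt A B -> siglt (S0 ++ A) (S0 ++ B).
Proof.
  intros H c ms' Hin. apply in_app_or in Hin. destruct Hin as [Hin|Hin].
  - exists ms'; split; [apply in_or_app; auto | apply Forall2_refl_le].
  - destruct (H c ms' Hin) as [ms [Hi Hf]]. exists ms; split; auto. apply in_or_app; auto.
Qed.

Lemma siglt_smeet_l : forall S1 S2, shape S1 S2 -> siglt (smeet S1 S2) S1.
Proof.
  intros S1 S2 H. induction H as [|e1 e2 r1 r2 [Hf Hl] Hr IH]; intros c ms' Hin; [destruct Hin|].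
  destruct Hin as [E|Hin].
  - subst e1. simpl in *. exists (cmeet ms' (snd e2)); split; auto. apply cmeet_le_l; auto.
  - destruct (IH c ms' Hin) as [ms [Hi Hf']]. exists ms; split; simpl; auto.
Qed.

Lemma siglt_smeet_r : forall S1 S2, shape S1 S2 -> siglt (smeet S1 S2) S2.
Proof.
  intros S1 S2 H. induction H as [|e1 e2 r1 r2 [Hf Hl] Hr IH]; intros c ms' Hin; [destruct Hin|].
  destruct Hin as [E|Hin].
  - subst e2. simpl in *. exists (cmeet (snd e1) ms'); split; auto.
    + left. rewrite Hf. reflexivity.
    + apply cmeet_le_r; auto.
  - destruct (IH c ms' Hin) as [ms [Hi Hf']]. exists ms; split; simpl; auto.
Qed.

Lemma bj_meet_aux SM S1g S2g : siglt SM S1g -> siglt SM S2g -> sfun SM ->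
  forall sg S1 S2, Forall2 (Rel S1g) sg S1 -> Forall2 (Rel S2g) sg S2 ->
  (forall t k A, In (t, k, A) sg -> datatype_no_guard A) ->
  Forall2 (Rel SM) sg (smeet S1 S2).
Proof.
  intros H1 H2 Hf sg S1 S2 F1. revert S2.
  induction F1 as [|d e1 sg r1 [Hf1 [Hl1 D1]] Hr IH]; intros S2 F2 Hng;
    inversion F2 as [|? e2 ? r2 [Hf2 [Hl2 D2]]]; subst; simpl; constructor.
  - unfold Rel; simpl. assert (Hl : length (snd e1) = length (snd e2)) by congruence.
    split; auto. split; [rewrite length_cmeet; auto|].
    destruct d as [[tn k] A]. assert (HA := Hng tn k A (or_introl eq_refl)).
    simpl in *. destruct A; simpl in *; auto;
      (apply meet; auto; [apply (anti SM S1g) | apply (anti SM S2g)]; auto).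
  - apply IH; auto. intros; eapply Hng; right; eauto.
Qed.

Lemma bj_closed S0 sg S1 S2 :
  NoDup (map fst S0 ++ map (fun d => fst (fst d)) sg) -> block_no_guard sg ->
  block_judg S0 sg S1 -> block_judg S0 sg S2 -> block_judg S0 sg (smeet S1 S2).
Proof.
  intros Hnd Hng B1 B2.
  assert (Hs := bj_shape _ _ _ _ B1 B2).
  change (Forall2 (Rel (S0 ++ smeet S1 S2)) sg (smeet S1 S2)).
  apply bj_meet_aux with (S1g := S0 ++ S1) (S2g := S0 ++ S2); auto.
  - apply siglt_app, siglt_smeet_l; auto.
  - apply siglt_app, siglt_smeet_r; auto.
  - apply nodup_sfun. rewrite map_app, smeet_names, (bj_names _ _ _ B1); auto.
Qed.

Theorem mainTheorem6 :
  (forall (S : signature) (G : ctx) (t : ty) (m : mode),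
      NoDup (map fst S) ->
      no_guard t -> has_mode S G t m ->
      exists Gmin : ctx,
        length Gmin = length G /\ has_mode S Gmin t m /\
        (forall G' : ctx, length G' = length G -> has_mode S G' t m ->
                          ctx_le Gmin G'))
  /\
  (forall (S0 : signature) (sg : block) (S : signature),
      NoDup (map fst S0 ++ map (fun d => fst (fst d)) sg) ->
      block_no_guard sg -> block_judg S0 sg S ->
      exists Smin : signature,
        block_judg S0 sg Smin /\
        (forall S' : signature, block_judg S0 sg S' -> sig_le Smin S')).
Proof.
  split.
  - intros S G t m Hnd Hng Hm.
    destruct (min_exists ctx_le cmeet csum (fun G' => length G' = length G /\ has_mode S G' t m))
      with (a := G) as [Gm [[Hl Hh] Hmin]]; auto.
    + intros a b [Ha Ha'] [Hb Hb']. split.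
      * rewrite length_cmeet; congruence.
      * apply meet; auto. apply nodup_sfun; auto. congruence.
    + intros a b [Ha _] [Hb _] Hn. apply cmeet_dec; auto. congruence.
    + exists Gm; repeat split; auto.
  - intros S0 sg S Hnd Hng B.
    destruct (min_exists sig_le smeet ssum (block_judg S0 sg)) with (a := S) as [Sm [HS Hmin]]; auto.
    + intros; apply bj_closed; auto.
    + intros a b Ha Hb Hn. apply smeet_dec; auto. eapply bj_shape; eauto.
    + exists Sm; auto.
Qed.
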